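(* Let $k\ge 2$, let $H$ be a finite $k$-uniform hypergraph and let $G$ be the 2-section of $H$. For every nonnegative integer $t$, the graph ${\rm ILT}'_t(G)$ is the 2-section of ${\rm ILTH}_t(H)$.
   Context: The 2-section of a hypergraph is the graph on the same vertex set in which two distinct vertices are adjacent iff some hyperedge contains both. ${\rm ILTH}_t(H)$ is defined by ${\rm ILTH}_0(H)=H$ and: given $H_t={\rm ILTH}_t(H)$, for each vertex $x$ add a new vertex $x'$ (its clone), and let the hyperedges of $H_{t+1}$ be those of $H_t$ together with all $e-x+x'=(e\setminus\{x\})\cup\{x'\}$ for $e\in E(H_t)$, $x\in e$. The graph process ${\rm ILT}'$: ${\rm ILT}'_0(G)=G$; given ${\rm ILT}'_t(G)$, the graph ${\rm ILT}'_{t+1}(G)$ has vertex set consisting of every vertex $v$ of ${\rm ILT}'_t(G)$ together with a new vertex $v'$ for each such $v$, and edge set consisting of $uv$, $uv'$ and $u'v$ for every edge $uv$ of ${\rm ILT}'_t(G)$ (and no other edges). *)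

(* Defs.v *)
From mathcomp Require Import all_boot.
Set Implicit Arguments. Unset Strict Implicit. Unset Printing Implicit Defensive.

(* Vertex types of the iterated constructions: level t+1 = level t + clones,
   with [inl x] the old vertex x and [inr x] its clone x'. *)
Fixpoint iterT (V : finType) (t : nat) : finType :=
  match t with
  | 0 => V
  | t'.+1 => (iterT V t' + iterT V t')%type
  end.

Definition uniform (T : finType) (k : nat) (E : {set {set T}}) : Prop :=
  forall e, e \in E -> #|e| = k.

Definition two_section (T : finType) (E : {set {set T}}) : rel T :=
  fun x y => (x != y) && [exists e in E, (x \in e) && (y \in e)].

Definition ILTH_step (T : finType) (E : {set {set T}}) : {set {set (T + T)%type}} :=
  [set [set (inl y : (T + T)%type) | y in e] | e : {set T} in E] :|:
  [set [set (inl y : (T + T)%type) | y in e :\ x] :|: [set (inr x : (T + T)%type)]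
     | e : {set T} in E, x : T in e].

Fixpoint ILTH (V : finType) (E : {set {set V}}) (t : nat) : {set {set iterT V t}} :=
  match t return {set {set iterT V t}} with
  | 0 => E
  | t'.+1 => @ILTH_step (iterT V t') (@ILTH V E t')
  end.

Definition ILTp_step (T : finType) (adj : rel T) : rel (T + T)%type :=
  fun a b => match a, b with
             | inl u, inl v => adj u v
             | inl u, inr v => adj u v
             | inr u, inl v => adj u v
             | inr _, inr _ => false
             end.

Fixpoint ILTp (V : finType) (adj : rel V) (t : nat) : rel (iterT V t) :=
  match t return rel (iterT V t) with
  | 0 => adj
  | t'.+1 => @ILTp_step (iterT V t') (@ILTp V adj t')
  end.

Arguments ILTH {V} E t.
Arguments ILTp {V} adj t.
Arguments two_section {T} E.
Arguments uniform {T} k E.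

(* Main.v *)
Require Import Defs.
From mathcomp Require Import all_boot.

Lemma step_ok (T : finType) (E : {set {set T}}) (a b : (T + T)%type) :
  ILTp_step (two_section E) a b = two_section (ILTH_step E) a b.
Proof.
have inlE : forall (e : {set T}) y, ((inl y : (T+T)%type) \in [set inl z | z in e]) = (y \in e).
  move=> e y; apply/imsetP/idP => [[z hz [->]]|hy] //; by exists y.
have inrE : forall (e:{set T}) y, ((inr y : (T+T)%type) \in [set inl z | z in e]) = false.
  move=> e y; apply/imsetP => -[z _ //].
have memE : forall (e : {set T}) x y, ((inl y : (T+T)%type) \in [set inl z | z in e :\ x] :|: [set inr x]) = (y \in e :\ x).
  by move=> e x y; rewrite in_setU inlE in_set1 orbF.
have memR : forall (e : {set T}) x y, ((inr y : (T+T)%type) \in [set inl z | z in e :\ x] :|: [set inr x]) = (y == x).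
  by move=> e x y; rewrite in_setU inrE in_set1.
case: a => u; case: b => v; rewrite /two_section /ILTH_step /=.
- congr (_ && _); apply/existsP/existsP.
  + case=> e /andP[hE /andP[hu hv]]; exists [set inl z | z in e].
    rewrite !inlE hu hv !andbT; apply/setUP; left; apply/imsetP; by exists e.
  + case=> f /andP[/setUP[/imsetP[e he ->]|/imset2P[e x he hx ->]] /andP[hu hv]].
    * by exists e; rewrite -!inlE he hu hv.
    * exists e; rewrite he; rewrite !memE in hu hv.
      by move: hu hv; rewrite !in_setD1 => /andP[_ ->] /andP[_ ->].
- apply/idP/existsP.
  + case/andP=> huv /existsP[e /andP[hE /andP[hu hv]]].
    exists ([set inl z | z in e :\ v] :|: [set inr v]).
    rewrite memE memR eqxx in_setD1 huv hu !andbT /=; apply/setUP; right.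
    by apply/imset2P; exists e v.
  + case=> f /andP[/setUP[/imsetP[e he ->]|/imset2P[e x he hx ->]] /andP[hu hv]].
    * by rewrite inrE in hv.
    * rewrite memE in hu; rewrite memR in hv; move/eqP: hv => hv; subst x.
      move: hu; rewrite in_setD1 => /andP[-> hu] /=.
      by apply/existsP; exists e; rewrite he hu hx.
- apply/idP/existsP.
  + case/andP=> huv /existsP[e /andP[hE /andP[hu hv]]].
    exists ([set inl z | z in e :\ u] :|: [set inr u]).
    rewrite memE memR eqxx in_setD1 eq_sym huv hv !andbT /=; apply/setUP; right.
    by apply/imset2P; exists e u.
  + case=> f /andP[/setUP[/imsetP[e he ->]|/imset2P[e x he hx ->]] /andP[hu hv]].
    * by rewrite inrE in hu.
    * rewrite memE in hv; rewrite memR in hu; move/eqP: hu => hu; subst x.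
      move: hv; rewrite in_setD1 => /andP[hvu hv].
      rewrite eq_sym hvu /=.
      by apply/existsP; exists e; rewrite he hv hx.
- symmetry; apply/negbTE/negP => /andP[huv /existsP[f /andP[hf /andP[hu hv]]]].
  case/setUP: hf => [/imsetP[e he hfe]|/imset2P[e x he hx hfe]]; subst f.
  + by rewrite inrE in hu.
  + rewrite !memR in hu hv; move: huv; by rewrite (eqP hu) (eqP hv) eqxx.
Qed.

Theorem lemma2p2 (k : nat) (V : finType) (E : {set {set V}}) :
  2 <= k -> uniform k E ->
  forall t : nat, forall x y : iterT V t,
    ILTp (two_section E) t x y = two_section (ILTH E t) x y.
Proof.
move=> _ _; elim=> [//|t IH] x y /=.
rewrite -step_ok.
by case: x => u; case: y => v; rewrite /= ?IH.
Qed.
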